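(* Let $\pi$ be a set of primes, $G$ a finite group, $H$ a $\pi$-Hall subgroup of $G$, and $A=A_1\times\dots\times A_s$ a normal subgroup of $G$ which is the (internal) direct product of subgroups $A_1,\dots,A_s$, such that $G$ acts transitively by conjugation on the set $\{A_1,\dots,A_s\}$. Assume $G=HAC_G(A)$. Then $k_\pi^G(A)=k_\pi^G(A_1)=\dots=k_\pi^G(A_s)$.
   Context: All groups are finite. A subgroup $H$ of $G$ is a $\pi$-Hall subgroup if all prime divisors of $|H|$ lie in $\pi$ and no prime divisor of $|G:H|$ lies in $\pi$. For a subnormal subgroup $A$ of a group $G$ possessing $\pi$-Hall subgroups, a $G$-induced $\pi$-Hall subgroup of $A$ is a subgroup $K\cap A$ with $K$ a $\pi$-Hall subgroup of $G$; an $A$-class of $G$-induced $\pi$-Hall subgroups is a set $\{(K\cap A)^x\mid x\in A\}$ with $K$ a $\pi$-Hall subgroup of $G$; and $k_\pi^G(A)$ denotes the number of distinct $A$-classes of $G$-induced $\pi$-Hall subgroups of $A$. (Each $A_i$ is subnormal in $G$, being normal in $A$.) *)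

(* Defs.v *)
From HB Require Import structures.
From mathcomp Require Import all_boot all_order all_fingroup all_solvable.
Set Implicit Arguments. Unset Strict Implicit. Unset Printing Implicit Defensive.
Import GroupScope.

Definition induced_Hall_classes (gT : finGroupType) (pi : nat_pred)
    (G A : {set gT}) : {set {set {set gT}}} :=
  [set ((K : {set gT}) :&: A) :^: A | K : {group gT} in [set K : {group gT} | pi.-Hall(G) K]].

Definition k_pi (gT : finGroupType) (pi : nat_pred) (G A : {set gT}) : nat :=
  #|induced_Hall_classes pi G A|.

(* Main.v *)
Require Import Defs.
From mathcomp Require Import all_boot all_order all_fingroup all_solvable.
Set Implicit Arguments. Unset Strict Implicit. Unset Printing Implicit Defensive.
Import GroupScope.

Lemma conj_classP (gT : finGroupType) (B : {group gT}) (X Y : {set gT}) :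
  reflect (exists2 x, x \in B & Y = X :^ x) (X :^: B == Y :^: B).
Proof.
rewrite -!orbitJs; apply: (iffP eqP) => [E | [x Bx ->]].
  have : Y \in orbit 'Js B X by rewrite E orbit_refl.
  by case/imsetP => x Bx ->; exists x.
by apply/esym/orbit_eqP; apply/imsetP; exists x.
Qed.

Lemma card_imset_eqrel (T U V : finType) (S : {set T}) (f : T -> U) (g : T -> V) :
  {in S &, forall x y, (f x == f y) = (g x == g y)} -> #|f @: S| = #|g @: S|.
Proof.
have H : forall (U V : finType) (f : T -> U) (g : T -> V),
  {in S &, forall x y, g x = g y -> f x = f y} -> #|f @: S| <= #|g @: S|.
  move=> U' V' f' g' E.
  have [x0 _ | S0] := pickP (mem S); last first.
    by rewrite (_ : S = set0) ?imset0 ?cards0 //; apply/setP => z; rewrite inE; apply/negbTE/negP => Sz; have := S0 z; rewrite /= Sz.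
  pose h (Y : V') := f' (odflt x0 [pick x in S | g' x == Y]).
  apply: (@leq_trans #|h @: (g' @: S)|); last exact: leq_imset_card. apply: subset_leq_card.
  apply/subsetP => _ /imsetP[x Sx ->]; apply/imsetP; exists (g' x).
    by apply/imsetP; exists x.
  rewrite /h; case: pickP => [y /andP[Sy /eqP gy] | /(_ x)]; last by rewrite Sx eqxx.
  by rewrite /= (E x y).
move=> E; apply/eqP; rewrite eqn_leq; apply/andP; split; apply: H.
  by move=> x y Sx Sy /eqP; rewrite -E // => /eqP.
by move=> x y Sx Sy /eqP; rewrite E // => /eqP.
Qed.
Lemma sub_bigdprod (gT : finGroupType) (I : Type) (r : seq I) (P : pred I)
  (F B : I -> {group gT}) (G : {group gT}) :
  \big[dprod/1]_(i <- r | P i) F i = G -> (forall i, P i -> B i \subset F i) ->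
  exists Q : {group gT}, [/\ \big[dprod/1]_(i <- r | P i) B i = Q,
      \prod_(i <- r | P i) B i = Q & Q \subset G].
Proof.
move=> + sBF; elim: r G => [|i r IHr] G; rewrite ?big_nil ?big_cons.
  by move=> <-; exists 1%G; rewrite subxx.
case: ifP => [Pi | _]; last exact: IHr.
case/dprodP=> [[K H defK defH] defG cKH tiKH].
rewrite defK defH in defG cKH tiKH; have [Q [dQ pQ sQH]] := IHr _ defH.
rewrite dQ pQ.
have sBK : B i \subset K by rewrite -defK sBF.
have cQB : Q \subset 'C(B i).
  by apply: subset_trans _ (centS sBK); apply: subset_trans sQH cKH.
exists (B i <*> Q)%G; split.
- rewrite dprodE //= ?cent_joinEr //; apply/trivgP; rewrite -tiKH setISS //.
- by rewrite /= cent_joinEr.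
- by rewrite /= cent_joinEr // -defG mulgSS.
Qed.

Lemma bigdprod_factor (gT : finGroupType) s (A_ : 'I_s -> {group gT})
   (A : {group gT}) j :
  \big[dprod/1]_(i < s) A_ i = A ->
  exists R : {group gT}, A_ j \x R = A /\ forall i, i != j -> A_ i \subset R.
Proof.
move=> defA; have defA' := defA; rewrite (bigD1 j) //= in defA'.
have [[K R defK defR] _ _ _] := dprodP defA'.
exists R; split; first by rewrite -defR.
move=> i nij; move: defR; rewrite (bigD1 i) //= => defR.
by case/dprodP: defR => [[K1 H1 -> ->] <- _ _]; apply: mulG_subl.
Qed.

Lemma partn_bigprod (pi : nat_pred) (I : Type) (r : seq I) (P : pred I) (F : I -> nat) :
  (forall i, P i -> 0 < F i) ->
  ((\prod_(i <- r | P i) F i)`_pi = \prod_(i <- r | P i) (F i)`_pi)%N.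
Proof.
move=> F0; elim: r => [|i r IH]; rewrite ?big_nil ?big_cons ?partn1 //.
case: ifP => Pi //; rewrite partnM ?IH ?F0 //.
exact: prodn_cond_gt0.
Qed.

Lemma conj_prod_factor (gT : finGroupType) (I : eqType) (r : seq I)
   (xf : I -> gT) (S : {set gT}) (Cj : {group gT}) j :
  uniq r -> j \in r -> (forall i, i != j -> xf i \in 'C(Cj)) ->
  S \subset Cj -> xf j \in Cj -> S :^ (\prod_(i <- r) xf i) = S :^ xf j.
Proof.
move=> ur jr cx sS xj; move: ur; case/splitPr: jr => r1 r2.
rewrite cat_uniq /= negb_or => /and3P[_ /andP[jr1 _] /andP[jr2 _]].
have cp : forall r', j \notin r' -> \prod_(i <- r') xf i \in 'C(Cj).
  move=> r' jr'; rewrite big_seq; apply: group_prod => i ir'; apply: cx.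
  by apply: contraNneq jr' => <-.
rewrite big_cat big_cons /= !conjsgM.
have sSj : S :^ xf j \subset Cj by rewrite -(conjGid xj) conjSg.
rewrite (normP (subsetP (subset_trans (centS sS) (cent_sub S)) _ (cp _ jr1))).
by rewrite (normP (subsetP (subset_trans (centS sSj) (cent_sub _)) _ (cp _ jr2))).
Qed.

Theorem lemma10 (gT : finGroupType) (pi : nat_pred) (G H A : {group gT})
    (s : nat) (A_ : 'I_s -> {group gT}) :
  pi.-Hall(G) H ->
  A <| G ->
  \big[dprod/1]_(i < s) A_ i = A ->
  (* G acts by conjugation on the set {A_1, ..., A_s} ... *)
  (forall i, forall g, g \in G -> exists j, A_ i :^ g = A_ j) ->
  (* ... and transitively *)
  (forall i j, exists2 g, g \in G & A_ i :^ g = A_ j) ->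
  (G : {set gT}) = H * A * 'C_G(A) ->
  forall i, k_pi pi G A = k_pi pi G (A_ i).
Proof.
move=> hallH nAG defA _ trans defG i.
have fac := fun j => bigdprod_factor j defA.
have nAjA : forall j, A_ j <| A.
  by move=> j; have [R [dR _]] := fac j; case: (dprod_normal2 dR).
have sAjA : forall j, A_ j \subset A by move=> j; apply: normal_sub.
have sAG : A \subset G := normal_sub nAG.
have conjA : forall j (S : {set gT}) x, S \subset A_ j -> x \in A * 'C(A) ->
    exists2 a, a \in A_ j & S :^ x = S :^ a.
  move=> j S x sS; have [R [dR _]] := fac j; have [_ mulR cR _] := dprodP dR.
  rewrite -{1}mulR -mulgA => /mulsgP[a y Aa Ry ->]; exists a => //.
  have cy : y \in 'C(A_ j).
    by apply: (subsetP _ _ Ry); apply: mul_subG => //; apply: centS.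
  have sSa : S :^ a \subset A_ j by rewrite -(conjGid Aa) conjSg.
  by rewrite conjsgM (normP (subsetP (subset_trans (centS sSa) (cent_sub _)) _ cy)).
have HallA : forall K : {group gT}, pi.-Hall(G) K -> pi.-Hall(A) (K :&: A).
  by move=> K hK; apply: Hall_setI_normal nAG hK.
have HallAj : forall (K : {group gT}) j, pi.-Hall(G) K -> pi.-Hall(A_ j) (K :&: A_ j).
  move=> K j hK; have := Hall_setI_normal (nAjA j) (HallA K hK).
  by rewrite -setIA (setIidPr (sAjA j)).
have prodHall : forall K : {group gT}, pi.-Hall(G) K ->
    K :&: A = \prod_(j < s) (K :&: A_ j).
  move=> K hK.
  have [Q [dQ pQ sQA]] := sub_bigdprod defA
     (B := fun j => (K :&: A_ j)%G) (fun j _ => subsetIr _ _).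
  rewrite pQ; apply/esym/eqP; rewrite eqEcard; apply/andP; split.
    rewrite subsetI sQA andbT -pQ.
    apply: (big_ind (fun X : {set gT} => X \subset K)) => [|X Y|j _]; [exact: sub1G | exact: mul_subG | exact: subsetIl].
  rewrite (card_Hall (HallA K hK)) -(bigdprod_card dQ) -(bigdprod_card defA).
  rewrite partn_bigprod // leq_eqVlt; apply/orP; left; apply/eqP.
  by apply: eq_bigr => j _ /=; rewrite (card_Hall (HallAj K j hK)).
have cover : forall M : {group gT}, pi.-Hall(G) M -> G \subset M * (A * 'C_G(A)).
  move=> M hM.
  pose N := (A <*> 'C_G(A))%G.
  have eqN : N :=: A * 'C_G(A) by rewrite /= cent_joinEr // subsetIr.
  have nNG : G \subset 'N(N).
    rewrite eqN normsM ?normal_norm //.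
    by rewrite /normal subsetIl normsI ?normG ?norms_cent ?normal_norm.
  have nNM : M \subset 'N(N) by apply: subset_trans (pHall_sub hM) nNG.
  have sNG : N \subset G by rewrite join_subG sAG subsetIl.
  have eGN : G / N = H / N.
    have eHN : (H : {set gT}) * N = G by rewrite eqN mulgA -defG.
    by rewrite -(quotientMidr N H) eHN.
  have piGN : pi.-group (G / N).
    by rewrite eGN; apply: quotient_pgroup (pHall_pgroup hallH).
  have hMN := quotient_pHall nNM hM.
  have eMN : M / N = G / N.
    apply/eqP; rewrite eqEcard quotientS ?(pHall_sub hM) //=.
    by rewrite (card_Hall hMN) part_pnat_id.
  have : G / N \subset (M <*> N) / N by rewrite -eMN quotientS ?joing_subl.
  rewrite quotientSGK //; last exact: joing_subr.
  by move=> /= h; apply: subset_trans h _; rewrite norm_joinEl // eqN.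
have cAij : forall k j, k != j -> A_ k \subset 'C(A_ j).
  move=> k j nkj; have [R [dR sR]] := fac j; have [_ _ cR _] := dprodP dR.
  exact: subset_trans (sR k nkj) cR.
have sAjG : forall j, A_ j \subset G by move=> j; apply: subset_trans (sAjA j) sAG.
have nAC : forall k, A * 'C(A) \subset 'N(A_ k).
  move=> k; apply: mul_subG; first exact: normal_norm.
  by apply: subset_trans (centS (sAjA k)) (cent_sub _).
have lemP : forall (M : {group gT}) j k g, pi.-Hall(G) M -> g \in G ->
    A_ j :^ g = A_ k -> exists2 a, a \in A_ k & (M :&: A_ j) :^ g = (M :&: A_ k) :^ a.
  move=> M j k g hM Gg Eg.
  have := subsetP (cover M hM) g Gg; case/mulsgP=> m n Mm Nn defg.
  have Nn' : n \in A * 'C(A).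
    by apply: (subsetP _ _ Nn); apply: mulgS; apply: subsetIr.
  have nk := subsetP (nAC k) n Nn'.
  have Ejm : A_ j :^ m = A_ k.
    by apply: (@conjsg_inj _ n); rewrite -conjsgM -defg Eg (normP nk).
  have [a Aa Ea] := conjA k (M :&: A_ k) n (subsetIr _ _) Nn'.
  by exists a => //; rewrite defg conjsgM conjIg Ejm (conjGid Mm).
have equiv : forall K L : {group gT}, pi.-Hall(G) K -> pi.-Hall(G) L ->
    ((K :&: A) :^: A == (L :&: A) :^: A) =
    ((K :&: A_ i) :^: A_ i == (L :&: A_ i) :^: A_ i).
  move=> K L hK hL; apply/conj_classP/conj_classP.
    case=> x Ax E.
    have nx : x \in 'N(A_ i) by apply: (subsetP (normal_norm (nAjA i))).
    have Ex : L :&: A_ i = (K :&: A_ i) :^ x.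
      have e1 : forall X : {set gT}, X :&: A :&: A_ i = X :&: A_ i.
        by move=> X; rewrite -setIA (setIidPr (sAjA i)).
      by rewrite -e1 E -{1}(normP nx) -conjIg e1.
    have Ax' : x \in A * 'C(A) by apply: (subsetP (mulG_subl _ _)).
    have [a Aa Ea] := conjA i (K :&: A_ i) x (subsetIr _ _) Ax'.
    by exists a => //; rewrite Ex Ea.
  case=> y Ay E.
  have ex : forall j, exists x, (x \in A_ j) && (L :&: A_ j == (K :&: A_ j) :^ x).
    move=> j; have [g Gg Eg] := trans i j.
    have [a1 Aa1 E1] := lemP L i j g hL Gg Eg.
    have nyi : y \in 'N(A_ i) by apply: (subsetP (normal_norm (nAjA i))); apply: (subsetP (sAjA i)).
    have Gyg : y * g \in G by rewrite groupM // (subsetP (sAjG i)).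
    have Eyg : A_ i :^ (y * g) = A_ j by rewrite conjsgM (normP nyi).
    have [a2 Aa2 E2] := lemP K i j (y * g) hK Gyg Eyg.
    exists (a2 * a1^-1); rewrite groupM ?groupV //=; apply/eqP.
    apply: (@conjsg_inj _ a1); rewrite -E1 E -conjsgM E2 -conjsgM mulgKV //.
  have [xf Hxf] := fin_all_exists ex.
  exists (\prod_(j < s) xf j).
    by apply: group_prod => j _; apply: (subsetP (sAjA j)); case/andP: (Hxf j).
  rewrite (prodHall L hL) (prodHall K hK).
  rewrite (big_morph (fun S => S :^ (\prod_(j < s) xf j)) (fun S T => conjsMg S T _) (conjs1g _)).
  apply: eq_bigr => j _; case/andP: (Hxf j) => Axj /eqP ->.
  apply/esym; apply: (conj_prod_factor (Cj := A_ j)); rewrite ?index_enum_uniq ?mem_index_enum ?subsetIr //.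
  move=> k nkj; apply: (subsetP (cAij k j nkj)); case/andP: (Hxf k) => //.
rewrite /k_pi /induced_Hall_classes; apply: card_imset_eqrel => K L.
by rewrite !inE => hK hL; apply: equiv.
Qed.
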